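(* Let $B=(T,D,\lambda)$ be an upwards closed quasi-bush containing no coat hangers and let $w\in V(T)$. Then every node $v\in\mathrm{OUT}(w,B)$ with $v\neq w$ is a child of $w$ in $T$.
   Context: A quasi-bush $B=(T,D,\lambda)$: a rooted tree $T$, a set $D$ of pointers from leaves of $T$ to nodes of $T$ (every leaf points to the root), and $\lambda\colon D\to\{0,1\}$. $v\le_T w$ means $v$ is an ancestor of $w$ (including $v=w$); $T(a)$ is the subtree of descendants of $a$. $G(B)$ is the directed graph on the leaves of $T$ where, for distinct leaves $u,v$ and $w$ the lowest ancestor of $v$ with $(u,w)\in D$, $(u,v)$ is an arc iff $\lambda((u,w))=1$; this $w$ is the connection point of $(u,v)$. $B$ is upwards closed if $(u,w)\in D$ and $w'\le_T w$ imply $(u,w')\in D$. A coat hanger is a subtree $T(a)$ such that $a$ is not the root, $a$ is not a leaf, and there is a leaf $v$ with $(v,p)\in D$, $\lambda((v,p))=1$ for the parent $p$ of $a$, and $v$ has no pointer to any node of $T(a)$. $\mathrm{OUT}(w,B)$ is the set of all $v$ such that $w$ is the connection point of some arc $(u,v)$ of $G(B)$. *)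

(* Defs.v *)
From mathcomp Require Import all_boot.
Set Implicit Arguments.
Unset Strict Implicit.
Unset Printing Implicit Defensive.

(* A finite rooted tree on a finite node type V, given by a root and a parent
   map; the root is its own parent and every node reaches the root by
   iterating parent (so there are no cycles other than the root loop). *)
Record rtree (V : finType) := RTree {
  root : V;
  parent : V -> V;
  parent_root : parent root = root;
  reach_root : forall v : V, exists k, iter k parent v = root
}.

Section Tree.
Variables (V : finType) (T : rtree V).

Definition anc (v w : V) : Prop := exists k, iter k (parent T) w = v.

Definition is_child (c p : V) : Prop := c <> root T /\ parent T c = p.

Definition is_leaf (v : V) : Prop := forall c, ~ is_child c v.
End Tree.

(* A quasi-bush B = (T, D, lambda). D is a set of pointers (u, w) given as a
   relation; lambda is only meaningful on D. *)
Record quasi_bush (V : finType) := QuasiBush {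
  qtree : rtree V;
  D : V -> V -> Prop;
  lam : V -> V -> bool;
  D_from_leaf : forall u w, D u w -> is_leaf qtree u;
  leaf_to_root : forall u, is_leaf qtree u -> D u (root qtree)
}.

Section Bush.
Variables (V : finType) (B : quasi_bush V).
Local Notation T := (qtree B).

Definition conn_point (u v w : V) : Prop :=
  anc T w v /\ D B u w /\ (forall w', anc T w' v -> D B u w' -> anc T w' w).

Definition arc (u v : V) : Prop :=
  is_leaf T u /\ is_leaf T v /\ u <> v /\
  exists w, conn_point u v w /\ lam B u w = true.

Definition OUT (w v : V) : Prop :=
  exists u, arc u v /\ conn_point u v w.

Definition upwards_closed : Prop :=
  forall u w w', D B u w -> anc T w' w -> D B u w'.

(* T(a) is a coat hanger *)
Definition coat_hanger (a : V) : Prop :=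
  a <> root T /\ ~ is_leaf T a /\
  exists v, is_leaf T v /\ D B v (parent T a) /\ lam B v (parent T a) = true /\
            (forall x, anc T a x -> ~ D B v x).

Definition no_coat_hangers : Prop := forall a, ~ coat_hanger a.
End Bush.

(* Main.v *)
Require Import Defs.
From mathcomp Require Import all_boot.

Section Aux.
Variables (V : finType) (T : rtree V).

Lemma reach_b (y : V) : exists k, (fun k => iter k (parent T) y == Defs.root T) k.
Proof. by case: (reach_root T y) => k hk; exists k; apply/eqP. Qed.

Definition dep (y : V) : nat := ex_minn (reach_b y).

Lemma dep_spec y : iter (dep y) (parent T) y = Defs.root T /\
   forall k, iter k (parent T) y = Defs.root T -> dep y <= k.
Proof.
rewrite /dep; case: ex_minnP => m /eqP Hm Hmin; split => // k Hk.
by apply: Hmin; apply/eqP.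
Qed.

Lemma dep_parent y : y <> Defs.root T -> dep (parent T y) < dep y.
Proof.
move=> Hy; case: (dep_spec y) => H1 _; case: (dep_spec (parent T y)) => _ H2.
case E: (dep y) H1 => [|d] H1; first by [].
rewrite ltnS; apply: H2; by rewrite -iterSr.
Qed.

Lemma dep_parent_le y : dep (parent T y) <= dep y.
Proof.
case: (eqVneq y (Defs.root T)) => [->|/eqP Hy]; first by rewrite parent_root.
by apply: ltnW; apply: dep_parent.
Qed.

Lemma dep_iter_le k y : dep (iter k (parent T) y) <= dep y.
Proof.
elim: k y => [|k IH] y //=.
exact: leq_trans (dep_parent_le _) (IH y).
Qed.

Lemma dep_iter_eq k y : dep (iter k (parent T) y) = dep y -> iter k (parent T) y = y.
Proof.
elim: k y => [|k IH] y // E.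
rewrite iterSr in E *.
case: (eqVneq y (Defs.root T)) => [Hr|/eqP Hy].
  rewrite Hr parent_root; elim: k {IH E} => //= k ->; exact: parent_root.
have := dep_iter_le k (parent T y); rewrite E => H.
by have := dep_parent y Hy; rewrite ltnNge H.
Qed.

Lemma anc_antisym x y : anc T x y -> anc T y x -> x = y.
Proof.
move=> [k Hk] [l Hl].
have h1 := dep_iter_le k y; have h2 := dep_iter_le l x.
rewrite Hk in h1; rewrite Hl in h2.
have E : dep x = dep y by apply/eqP; rewrite eqn_leq h1 h2.
by rewrite -Hk; apply: dep_iter_eq; rewrite Hk.
Qed.
End Aux.

Theorem lemma7p31 (V : finType) (B : quasi_bush V) :
  upwards_closed B -> no_coat_hangers B ->
  forall w v : V, OUT B w v -> v <> w -> is_child (qtree B) v w.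
Proof.
move=> Hup Hnc w v [u [[Hlu [Hlv [Huv [w0 [Hc0 Hlam]]]]] Hc]] Hvw.
have Hw0 : w0 = w.
  case: Hc0 => A0 [D0 M0]; case: Hc => A [D1 M1].
  by apply: anc_antisym; [apply: M1 | apply: M0].
subst w0.
case: (Hc) => [Hanc [Du Hmin]].
have Hex : exists k, (fun k => iter k (parent (qtree B)) v == w) k.
  by case: Hanc => k hk; exists k; apply/eqP.
case: (ex_minnP Hex) => k /eqP Hk Hkmin.
case: k Hk Hkmin => [|k] Hk Hkmin; first by case: Hvw.
set a := iter k (parent (qtree B)) v.
have Hpa : parent (qtree B) a = w by rewrite /a -Hk.
have Haw : a <> w.
  move=> E; have := Hkmin k; rewrite -/a E eqxx => /(_ isT); by rewrite ltnn.
have Har : a <> Defs.root (qtree B).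
  by move=> E; apply: Haw; rewrite -Hpa E parent_root.
have Haav : anc (qtree B) a v by exists k.
case: (eqVneq a v) => [Eav|/eqP Hav].
  by rewrite -Eav; split.
exfalso; apply: (Hnc a); split => //; split.
  case: k Hk Hkmin @a Hpa Haw Har Haav Hav => [|k] Hk Hkmin a Hpa Haw Har Haav Hav.
    by case: Hav.
  move=> Hl; apply: (Hl (iter k (parent (qtree B)) v)); split.
    move=> E; apply: Har; by rewrite /a /= E parent_root.
  by [].
exists u; split => //; rewrite Hpa; split => //; split => //.
move=> x Hax Dx.
have Da := Hup _ _ _ Dx Hax.
have Haw' := Hmin _ Haav Da.
apply: Haw; apply: (@anc_antisym _ (qtree B) a w Haw'); by exists 1.
Qed.
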